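(* Let $t>1$ and let $U:[-2\pi,2\pi]\to\mathbb{R}$ be given by \[ U(x)=\begin{cases}-\sin(\Psi_t^{-1}(x+2\pi)), & x<0,\\ -\sin(\Psi_t^{-1}(x)), & x\ge0.\end{cases} \] There exists $C=C(t)>0$ such that for any $\epsilon\in(0,\tfrac12]$ there exists a ReLU neural network $\Phi_\epsilon:\mathbb{R}\to\mathbb{R}$ with $\mathrm{depth}(\Phi_\epsilon)\le C\log(\epsilon^{-1})^2$, $\mathrm{width}(\Phi_\epsilon)\le C$ and $\|\Phi_\epsilon-U\|_{L^1([-2\pi,2\pi])}\le\epsilon$.
   Context: For $t>1$, let $x_t\in(0,\pi)$ be the unique positive solution of $x_t=t\sin(x_t)$ and $\Psi_t:[x_t,2\pi-x_t]\to[0,2\pi]$, $\Psi_t(x_0)=x_0-t\sin(x_0)$ (a bijection with inverse $\Psi_t^{-1}$). For a ReLU network, depth is the number of hidden layers and width the maximal number of neurons in a hidden layer. *)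

(* Defs.v *)
From Stdlib Require Import Reals List ClassicalEpsilon.
From Coquelicot Require Import Coquelicot.
Import ListNotations.
Open Scope R_scope.

Definition x_t (t : R) : R :=
  epsilon (inhabits 0) (fun x => 0 < x < PI /\ x = t * sin x).

Definition Psi (t x : R) : R := x - t * sin x.

Definition Psi_inv (t y : R) : R :=
  epsilon (inhabits 0)
    (fun x => x_t t <= x <= 2 * PI - x_t t /\ Psi t x = y).

Definition U (t x : R) : R :=
  if Rlt_dec x 0 then - sin (Psi_inv t (x + 2 * PI))
  else - sin (Psi_inv t x).

(* An affine layer: weight matrix as a list of rows, and a bias vector. *)
Definition affine : Type := (list (list R) * list R)%type.

Definition dot (u v : list R) : R :=
  fold_right Rplus 0 (map (fun p => fst p * snd p) (combine u v)).

Definition apply_aff (A : affine) (x : list R) : list R :=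
  map (fun p => dot (fst p) x + snd p) (combine (fst A) (snd A)).

Definition relu_vec (x : list R) : list R := map (fun z => Rmax 0 z) x.

Definition out_dim (A : affine) : nat := length (snd A).

Definition wf_aff (A : affine) (m n : nat) : Prop :=
  length (snd A) = n /\ length (fst A) = n /\ List.Forall (fun r => length r = m) (fst A).

(* Network = list of affine layers [A_1; ...; A_{L+1}], with ReLU applied
   after each of A_1..A_L; input dimension m, output dimension 1. *)
Fixpoint wf_net (m : nat) (net : list affine) : Prop :=
  match net with
  | [] => False
  | [A] => wf_aff A m 1
  | A :: rest => wf_aff A m (out_dim A) /\ wf_net (out_dim A) rest
  end.

Fixpoint eval_net (net : list affine) (x : list R) : list R :=
  match net with
  | [] => x
  | [A] => apply_aff A x
  | A :: rest => eval_net rest (relu_vec (apply_aff A x))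
  end.

Definition realize (net : list affine) (x : R) : R := hd 0 (eval_net net [x]).

(* depth = number of hidden layers *)
Definition depth (net : list affine) : nat := (length net - 1)%nat.

(* width = maximal number of neurons in a hidden layer *)
Definition width (net : list affine) : nat := list_max (map out_dim (removelast net)).

(* Main.v *)
Require Import Defs.
From Stdlib Require Import Reals List Lra Lia Classical ClassicalEpsilon ZArith.
From Coquelicot Require Import Coquelicot.
Import ListNotations.
Open Scope R_scope.

Lemma sin_lb1 a : 0 <= a -> a <= PI -> a - a^3/6 <= sin a.
Proof.
  intros H1 H2. destruct (sin_bound a 0 H1 H2) as [H _].
  unfold sin_approx, sin_term in H. simpl in H. simpl in H. lra.
Qed.

Lemma cont_Psi t : continuity (fun x => x - t * sin x).
Proof.
  apply continuity_minus. apply derivable_continuous, derivable_id.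
  apply continuity_mult. apply continuity_const. intros ? ?; reflexivity.
  apply continuity_sin.
Qed.

Lemma x_t_exists t : 1 < t -> exists x, 0 < x < PI /\ x = t * sin x.
Proof.
  intros ht. set (d := Rmin 1 (1 - /t)).
  assert (Ht0 : 0 < /t) by (apply Rinv_0_lt_compat; lra).
  assert (Ht1 : /t < 1) by (rewrite <- Rinv_1; apply Rinv_lt_contravar; lra).
  assert (Hd0 : 0 < d) by (unfold d; apply Rmin_pos; lra).
  assert (Hd1 : d <= 1) by (unfold d; apply Rmin_l).
  assert (Hd2 : d <= 1 - /t) by (unfold d; apply Rmin_r).
  assert (HPI : 3 < PI) by (generalize PI2_3_2; lra).
  assert (Hs := sin_lb1 d ltac:(lra) ltac:(lra)).
  assert (Hfd : d - t * sin d < 0).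
  { assert (d^3 <= d^2) by (simpl; nra).
    assert (d * d <= d * (1 - /t)) by nra.
    assert (t * (d - d^3/6) <= t * sin d) by nra.
    assert (t * d * (1 - /t) = t*d - d) by (field; lra).
    simpl in *. nra. }
  destruct (IVT_cor _ d PI (cont_Psi t) ltac:(lra)) as [z [Hz1 Hz2]].
  { rewrite sin_PI. nra. }
  exists z. assert (z <> PI) by (intro; subst; rewrite sin_PI in Hz2; lra).
  split; [lra| lra].
Qed.

Section Ana.
Variable t : R.
Hypothesis ht : 1 < t.

Definition xst := x_t t.

Lemma xst_spec : 0 < xst < PI /\ xst = t * sin xst.
Proof.
  unfold xst, x_t. apply epsilon_spec. apply x_t_exists; auto.
Qed.

Lemma x_cos_lt_sin x : 0 < x < PI -> x * cos x < sin x.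
Proof.
  intros [H1 H2].
  destruct (MVT_cor2 (fun x => sin x - x * cos x) (fun x => x * sin x) 0 x H1) as [c [Hc1 Hc2]].
  { intros c _. 
    replace (c * sin c) with (cos c - (1 * cos c + c * (- sin c))) by ring.
    apply derivable_pt_lim_minus. apply derivable_pt_lim_sin.
    apply derivable_pt_lim_mult. apply derivable_pt_lim_id. apply derivable_pt_lim_cos. }
  rewrite sin_0, cos_0 in Hc1.
  assert (0 < sin c) by (apply sin_gt_0; lra).
  assert (0 < c * sin c * (x - 0)) by (apply Rmult_lt_0_compat; [apply Rmult_lt_0_compat|]; lra).
  lra.
Qed.

Definition m0 := 1 - t * cos xst.

Lemma m0_pos : 0 < m0.
Proof.
  destruct xst_spec as [[H1 H2] H3]. unfold m0.
  destruct (Rle_lt_dec (cos xst) 0).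
  - nra.
  - assert (H := x_cos_lt_sin xst ltac:(lra)).
    rewrite H3 in H at 1.
    assert (0 < sin xst) by (apply sin_gt_0; lra).
    assert (t * cos xst * sin xst < 1 * sin xst) by nra. nra.
Qed.

Definition In_I E := xst <= E <= 2 * PI - xst.

Lemma cos_le_xt E : In_I E -> cos E <= cos xst.
Proof.
  unfold In_I; intros [H1 H2]. destruct xst_spec as [[Hx1 Hx2] _].
  destruct (Rle_lt_dec E PI).
  - destruct (Req_dec E xst). subst; lra.
    left; apply cos_decreasing_1; lra.
  - replace (cos E) with (cos (2 * PI - E)).
    2: { rewrite cos_minus, cos_2PI, sin_2PI; ring. }
    destruct (Req_dec (2*PI - E) xst). rewrite H; lra.
    left; apply cos_decreasing_1; lra.
Qed.

Lemma Psi_growth a b : In_I a -> In_I b -> a <= b -> Psi t b - Psi t a >= m0 * (b - a).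
Proof.
  intros Ha Hb Hab. destruct (Req_dec a b). subst; lra.
  destruct (MVT_cor2 (Psi t) (fun x => 1 - t * cos x) a b ltac:(lra)) as [c [Hc1 Hc2]].
  { intros c _. unfold Psi. apply derivable_pt_lim_minus. apply derivable_pt_lim_id.
    replace (t * cos c) with (0 * sin c + t * cos c) by ring.
    apply derivable_pt_lim_mult. apply derivable_pt_lim_const. apply derivable_pt_lim_sin. }
  rewrite Hc1. assert (In_I c) by (unfold In_I in *; lra).
  assert (cos c <= cos xst) by (apply cos_le_xt; auto).
  unfold m0. apply Rle_ge. apply Rmult_le_compat_r. lra. nra.
Qed.

Lemma Psi_strict a b : In_I a -> In_I b -> a < b -> Psi t a < Psi t b.
Proof.
  intros. assert (H2 := Psi_growth a b H H0 ltac:(lra)). assert (H3 := m0_pos).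
  assert (0 < m0 * (b - a)) by (apply Rmult_lt_0_compat; lra). lra.
Qed.

Lemma Psi_xt : Psi t xst = 0.
Proof. unfold Psi. destruct xst_spec as [_ H]. lra. Qed.

Lemma Psi_2pi_xt : Psi t (2*PI - xst) = 2 * PI.
Proof. unfold Psi. rewrite sin_minus, cos_2PI, sin_2PI. destruct xst_spec as [_ H]. lra. Qed.

Lemma Psi_inv_spec y : 0 <= y <= 2 * PI -> In_I (Psi_inv t y) /\ Psi t (Psi_inv t y) = y.
Proof.
  intros Hy. unfold Psi_inv. fold xst. apply epsilon_spec.
  destruct xst_spec as [[Hx1 Hx2] _].
  destruct (IVT_cor (fun x => Psi t x - y) xst (2*PI - xst)) as [z [Hz1 Hz2]].
  - apply continuity_minus. apply cont_Psi. apply continuity_const; intros ? ?; reflexivity.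
  - lra.
  - cbv beta; rewrite Psi_xt, Psi_2pi_xt. nra.
  - exists z. split. exact Hz1. lra.
Qed.

Lemma Psi_inv_lip y1 y2 : 0 <= y1 <= 2 * PI -> 0 <= y2 <= 2 * PI ->
  Rabs (Psi_inv t y1 - Psi_inv t y2) <= Rabs (y1 - y2) / m0.
Proof.
  intros H1 H2. destruct (Psi_inv_spec y1 H1) as [I1 P1].
  destruct (Psi_inv_spec y2 H2) as [I2 P2]. assert (Hm := m0_pos).
  apply Rmult_le_reg_r with m0; auto. unfold Rdiv. rewrite Rmult_assoc, Rinv_l, Rmult_1_r by lra.
  destruct (Rle_lt_dec (Psi_inv t y1) (Psi_inv t y2)).
  - assert (H := Psi_growth _ _ I1 I2 r). rewrite P1, P2 in H.
    rewrite Rabs_left1 by lra. rewrite Rabs_left1 by nra. nra.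
  - assert (H := Psi_growth _ _ I2 I1 ltac:(lra)). rewrite P1, P2 in H.
    rewrite Rabs_right by lra. rewrite Rabs_right by nra. nra.
Qed.

End Ana.

Definition relu (z : R) := Rmax 0 z.

Lemma relu_relu z : Rmax 0 (Rmax 0 z) = Rmax 0 z.
Proof. apply Rmax_right. apply Rmax_l. Qed.

Lemma relu_dec z : Rmax 0 z - Rmax 0 (- z) = z.
Proof. unfold Rmax. destruct (Rle_dec 0 z), (Rle_dec 0 (-z)); lra. Qed.

Definition enc (d s c : R) : list R :=
  [Rmax 0 d; Rmax 0 (-d); Rmax 0 s; Rmax 0 (-s); Rmax 0 c; Rmax 0 (-c)].

Definition La (K : R) : affine :=
  ([[1]; [-1]; [K/2]; [K/2]], [0; 0; 1/2; -1/2]).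
Definition Lb : affine :=
  ([[1; -1; -2*PI; 2*PI]; [-1; 1; 2*PI; -2*PI];
    [0;0;0;0]; [0;0;0;0]; [0;0;0;0]; [0;0;0;0]],
   [PI; -PI; 0; 0; -1; 1]).

Definition L1 (K t : R) : affine :=
  ([[1;0;0;0;0;0]; [0;1;0;0;0;0]; [0;0;1;0;0;0]; [0;0;0;1;0;0]; [0;0;0;0;1;0]; [0;0;0;0;0;1];
    [K/2; -K/2; t*K/2; -(t*K/2); 0; 0]; [K/2; -K/2; t*K/2; -(t*K/2); 0; 0]],
   [0;0;0;0;0;0; 1/2; -1/2]).
Definition L2 : affine :=
  ([[1;0;0;0;0;0;0;0]; [0;1;0;0;0;0;0;0]; [0;0;1;0;0;0;0;0]; [0;0;0;1;0;0;0;0];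
    [0;0;0;0;1;0;0;0]; [0;0;0;0;0;1;0;0]; [0;0;0;0;0;0;1;0]; [0;0;0;0;0;0;0;1];
    [0;0;0;0;1;-1;1;-1]; [0;0;0;0;-1;1;1;-1]; [0;0;1;-1;0;0;1;-1]; [0;0;-1;1;0;0;1;-1]],
   [0;0;0;0;0;0;0;0;-1;-1;-1;-1]).
Definition L3 (h : R) : affine :=
  let ch := cos h in let sh := sin h in
  ([[1;-1;0;0;0;0;-2*h;2*h;0;0;0;0]; [-1;1;0;0;0;0;2*h;-2*h;0;0;0;0];
    [0;0;ch;-ch;-sh;sh;0;0;2*sh;-2*sh;0;0]; [0;0;-ch;ch;sh;-sh;0;0;-2*sh;2*sh;0;0];
    [0;0;sh;-sh;ch;-ch;0;0;0;0;-2*sh;2*sh]; [0;0;-sh;sh;-ch;ch;0;0;0;0;2*sh;-2*sh]],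
   [h; -h; 0; 0; 0; 0]).
Definition Lf : affine := ([[0;0;-1;1;0;0]; [0;0;-1;1;0;0]], [1; -1]).
Definition Fin : affine := ([[1;-1]], [-1]).

Definition stepN (K t h : R) (st : R * R * R) : R * R * R :=
  let '(d, s, c) := st in
  let z := d + t * s in
  let r1 := Rmax 0 ((K * z + 1) / 2) in
  let r2 := Rmax 0 ((K * z + 1) / 2 - 1) in
  let be := r1 - r2 in
  let p1 := Rmax 0 (c - 1 + be) in
  let p2 := Rmax 0 (- c - 1 + be) in
  let q1 := Rmax 0 (s - 1 + be) in
  let q2 := Rmax 0 (- s - 1 + be) in
  (d - (2 * be - 1) * h,
   s * cos h + (2 * (p1 - p2) - c) * sin h,
   c * cos h - (2 * (q1 - q2) - s) * sin h).

Definition encs (st : R * R * R) := let '(d, s, c) := st in enc d s c.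

Lemma eval_cons A rest x : rest <> [] ->
  eval_net (A :: rest) x = eval_net rest (relu_vec (apply_aff A x)).
Proof. destruct rest. intro H; now contradiction H. reflexivity. Qed.


Ltac lst := repeat match goal with |- cons _ _ = cons _ _ => apply f_equal2 end;
  try reflexivity; try (apply f_equal; field).

Lemma La_eval K x : relu_vec (apply_aff (La K) [x]) =
  [Rmax 0 x; Rmax 0 (-x); Rmax 0 ((K*x+1)/2); Rmax 0 ((K*x+1)/2 - 1)].
Proof. unfold La, apply_aff, relu_vec, dot; simpl; lst. Qed.

Lemma Lb_eval a1 a2 a3 a4 : relu_vec (apply_aff Lb [a1;a2;a3;a4]) =
  enc ((a1 - a2) - PI * (2 * (a3 - a4) - 1)) 0 (-1).
Proof. unfold Lb, enc, apply_aff, relu_vec, dot; simpl; lst. Qed.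

Lemma L1_eval K t a1 a2 a3 a4 a5 a6 : relu_vec (apply_aff (L1 K t) [a1;a2;a3;a4;a5;a6]) =
  [Rmax 0 a1; Rmax 0 a2; Rmax 0 a3; Rmax 0 a4; Rmax 0 a5; Rmax 0 a6;
   Rmax 0 ((K * ((a1 - a2) + t * (a3 - a4)) + 1) / 2);
   Rmax 0 ((K * ((a1 - a2) + t * (a3 - a4)) + 1) / 2 - 1)].
Proof. unfold L1, apply_aff, relu_vec, dot; simpl; lst. Qed.

Lemma L2_eval b1 b2 b3 b4 b5 b6 b7 b8 : relu_vec (apply_aff L2 [b1;b2;b3;b4;b5;b6;b7;b8]) =
  [Rmax 0 b1; Rmax 0 b2; Rmax 0 b3; Rmax 0 b4; Rmax 0 b5; Rmax 0 b6; Rmax 0 b7; Rmax 0 b8;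
   Rmax 0 ((b5 - b6) - 1 + (b7 - b8)); Rmax 0 (- (b5 - b6) - 1 + (b7 - b8));
   Rmax 0 ((b3 - b4) - 1 + (b7 - b8)); Rmax 0 (- (b3 - b4) - 1 + (b7 - b8))].
Proof. unfold L2, apply_aff, relu_vec, dot; simpl; lst. Qed.

Lemma L3_eval h e1 e2 e3 e4 e5 e6 e7 e8 e9 e10 e11 e12 :
  relu_vec (apply_aff (L3 h) [e1;e2;e3;e4;e5;e6;e7;e8;e9;e10;e11;e12]) =
  enc ((e1 - e2) - (2 * (e7 - e8) - 1) * h)
      ((e3 - e4) * cos h + (2 * (e9 - e10) - (e5 - e6)) * sin h)
      ((e5 - e6) * cos h - (2 * (e11 - e12) - (e3 - e4)) * sin h).
Proof. unfold L3, enc, apply_aff, relu_vec, dot; simpl; lst. Qed.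

Lemma Lf_eval a1 a2 a3 a4 a5 a6 : relu_vec (apply_aff Lf [a1;a2;a3;a4;a5;a6]) =
  [Rmax 0 (-(a3 - a4) + 1); Rmax 0 (-(a3 - a4) - 1)].
Proof. unfold Lf, apply_aff, relu_vec, dot; simpl; lst. Qed.

Lemma Fin_eval a b : apply_aff Fin [a; b] = [a - b - 1].
Proof. unfold Fin, apply_aff, dot; simpl. f_equal. ring. Qed.

Lemma block_eval K t h d s c :
  relu_vec (apply_aff (L3 h) (relu_vec (apply_aff L2 (relu_vec (apply_aff (L1 K t) (enc d s c))))))
  = encs (stepN K t h (d, s, c)).
Proof.
  unfold enc at 1. rewrite L1_eval, L2_eval, L3_eval. unfold encs, stepN.
  rewrite !relu_relu, !relu_dec.
  reflexivity.
Qed.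

Definition hh (H : R) (j : nat) := H / 2 ^ (S j).

Fixpoint blocks (K t H : R) (j n : nat) : list affine :=
  match n with
  | O => []
  | S n' => L1 K t :: L2 :: L3 (hh H j) :: blocks K t H (S j) n'
  end.

Fixpoint iterN (K t H : R) (j n : nat) (st : R * R * R) : R * R * R :=
  match n with
  | O => st
  | S n' => iterN K t H (S j) n' (stepN K t (hh H j) st)
  end.

Definition net (K t H : R) (n : nat) : list affine :=
  La K :: Lb :: blocks K t H 0 n ++ [Lf; Fin].

Lemma blocks_eval K t H n : forall j st rest, rest <> [] ->
  eval_net (blocks K t H j n ++ rest) (encs st) = eval_net rest (encs (iterN K t H j n st)).
Proof.
  induction n as [|n IH]; intros j st rest Hr. reflexivity.
  cbn [blocks iterN app]. assert (Hne : blocks K t H (S j) n ++ rest <> []).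
  { destruct (blocks K t H (S j) n); simpl; [exact Hr| discriminate]. }
  rewrite eval_cons by discriminate. rewrite eval_cons by discriminate.
  rewrite eval_cons by exact Hne.
  destruct st as [[d s] c]. simpl encs at 1. rewrite block_eval. apply IH. exact Hr.
Qed.

Definition init (K x : R) : R * R * R :=
  (x - PI * (2 * (Rmax 0 ((K*x+1)/2) - Rmax 0 ((K*x+1)/2 - 1)) - 1), 0, -1).

Definition outF (st : R * R * R) : R :=
  let '(d, s, c) := st in Rmax 0 (-s + 1) - Rmax 0 (-s - 1) - 1.

Lemma realize_net K t H n x :
  realize (net K t H n) x = outF (iterN K t H 0 n (init K x)).
Proof.
  unfold realize, net. rewrite eval_cons by discriminate.
  rewrite eval_cons by (destruct n; discriminate).
  rewrite La_eval, Lb_eval. rewrite relu_dec.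
  change (enc (x - PI * (2 * (Rmax 0 ((K * x + 1) / 2) - Rmax 0 ((K * x + 1) / 2 - 1)) - 1)) 0 (-1))
    with (encs (init K x)).
  rewrite blocks_eval by discriminate.
  destruct (iterN K t H 0 n (init K x)) as [[d s] c].
  simpl encs. cbn [eval_net]. unfold enc. rewrite Lf_eval, Fin_eval. simpl. rewrite relu_dec. reflexivity.
Qed.

Lemma wf_cons m A rest : rest <> [] -> wf_aff A m (out_dim A) -> wf_net (out_dim A) rest ->
  wf_net m (A :: rest).
Proof. destruct rest. intro H; now contradiction H. intros _ H1 H2. simpl. auto. Qed.

Ltac wfa := unfold wf_aff; simpl; split; [reflexivity| split; [reflexivity| repeat constructor]].

Lemma wf_blocks K t H n : forall j, wf_net 6 (blocks K t H j n ++ [Lf; Fin]).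
Proof.
  induction n as [|n IH]; intros j.
  - simpl. split. wfa. wfa.
  - cbn [blocks app]. apply wf_cons. discriminate. wfa.
    apply wf_cons. discriminate. wfa.
    apply wf_cons. destruct n; discriminate. wfa. apply IH.
Qed.

Lemma wf_netK K t H n : wf_net 1 (net K t H n).
Proof.
  unfold net. apply wf_cons. discriminate. wfa.
  apply wf_cons. destruct n; discriminate. wfa. apply wf_blocks.
Qed.

Lemma length_blocks K t H n : forall j, length (blocks K t H j n) = (3 * n)%nat.
Proof. induction n; intros j; simpl; [reflexivity| rewrite IHn; lia]. Qed.

Lemma depth_net K t H n : depth (net K t H n) = (3 * n + 3)%nat.
Proof. unfold depth, net. simpl. rewrite length_app, length_blocks. simpl. lia. Qed.

Lemma Forall_removelast {T : Type} (Q : T -> Prop) (l : list T) : List.Forall Q l -> List.Forall Q (removelast l).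
Proof.
  induction l as [|a l IH]; intros H. constructor.
  inversion H; subst. destruct l. constructor. simpl. constructor; auto.
Qed.

Lemma width_net K t H n : (width (net K t H n) <= 12)%nat.
Proof.
  unfold width. apply list_max_le. apply List.Forall_map. apply Forall_removelast.
  unfold net. apply List.Forall_cons; [unfold out_dim; simpl; lia|]. apply List.Forall_cons; [unfold out_dim; simpl; lia|].
  apply List.Forall_app. split.
  - clear. revert n. assert (G : forall n j, List.Forall (fun x : affine => (out_dim x <= 12)%nat) (blocks K t H j n)).
    2: intros; apply G.
    induction n; intros j; simpl. constructor.
    apply List.Forall_cons; [unfold out_dim; simpl; lia|]. apply List.Forall_cons; [unfold out_dim; simpl; lia|]. apply List.Forall_cons; [unfold out_dim; simpl; lia|]. apply IHn.
  - apply List.Forall_cons; [unfold out_dim; simpl; lia|]. apply List.Forall_cons; [unfold out_dim; simpl; lia|]. constructor.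
Qed.

Lemma cp_plus f g x : continuity_pt f x -> continuity_pt g x -> continuity_pt (fun y => f y + g y) x.
Proof. intros; apply continuity_pt_plus; auto. Qed.
Lemma cp_minus f g x : continuity_pt f x -> continuity_pt g x -> continuity_pt (fun y => f y - g y) x.
Proof. intros; apply continuity_pt_minus; auto. Qed.
Lemma cp_mult f g x : continuity_pt f x -> continuity_pt g x -> continuity_pt (fun y => f y * g y) x.
Proof. intros; apply continuity_pt_mult; auto. Qed.
Lemma cp_opp f x : continuity_pt f x -> continuity_pt (fun y => - f y) x.
Proof. intros; apply continuity_pt_opp; auto. Qed.
Lemma cp_const c x : continuity_pt (fun _ => c) x.
Proof. apply continuity_pt_const. intros ? ?; reflexivity. Qed.
Lemma cp_id x : continuity_pt (fun y => y) x.
Proof. apply derivable_continuous_pt, derivable_pt_id. Qed.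
Lemma cp_relu f x : continuity_pt f x -> continuity_pt (fun y => Rmax 0 (f y)) x.
Proof.
  intros H. apply continuity_pt_ext with (fun y => (f y + Rabs (f y)) * / 2).
  { intro y. unfold Rmax, Rabs. destruct Rle_dec, Rcase_abs; lra. }
  apply cp_mult. apply cp_plus. auto.
  apply (continuity_pt_comp f Rabs). auto. apply Rcontinuity_abs. apply cp_const.
Qed.
Lemma cp_abs f x : continuity_pt f x -> continuity_pt (fun y => Rabs (f y)) x.
Proof. intros. apply (continuity_pt_comp f Rabs). auto. apply Rcontinuity_abs. Qed.

Ltac cpt := unfold Rdiv; repeat first [ apply cp_const | apply cp_id | assumption | apply cp_plus | apply cp_minus | apply cp_mult | apply cp_opp | apply cp_relu ].

Definition C3 (f : R -> R * R * R) := forall x,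
  continuity_pt (fun y => fst (fst (f y))) x /\ continuity_pt (fun y => snd (fst (f y))) x /\
  continuity_pt (fun y => snd (f y)) x.

Lemma st_eta (st : R * R * R) : st = (fst (fst st), snd (fst st), snd st).
Proof. destruct st as [[? ?] ?]; reflexivity. Qed.

Lemma stepN_C3 K t h f : C3 f -> C3 (fun y => stepN K t h (f y)).
Proof.
  intros Hf x. destruct (Hf x) as [H1 [H2 H3]].
  split; [|split]; (eapply continuity_pt_ext; [intro y; rewrite (st_eta (f y)); reflexivity|]);
  cbn [stepN fst snd]; cpt.
Qed.

Lemma iterN_C3 K t H n : forall j f, C3 f -> C3 (fun y => iterN K t H j n (f y)).
Proof.
  induction n; intros j f Hf. exact Hf.
  simpl. apply (IHn (S j) (fun y => stepN K t (hh H j) (f y))). apply stepN_C3. exact Hf.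
Qed.

Lemma init_C3 K : C3 (init K).
Proof. intro x. unfold init; simpl. split; [|split]; cpt. Qed.

Lemma realize_cont K t H n x : continuity_pt (realize (net K t H n)) x.
Proof.
  eapply continuity_pt_ext. { intro y. symmetry. apply realize_net. }
  destruct (iterN_C3 K t H n 0 _ (init_C3 K) x) as [_ [H2 _]].
  eapply continuity_pt_ext. { intro y. rewrite (st_eta (iterN K t H 0 n (init K y))). reflexivity. }
  cbn [outF fst snd]. cpt.
Qed.

Lemma sin_lip a b : Rabs (sin a - sin b) <= Rabs (a - b).
Proof.
  destruct (Req_dec a b). subst. rewrite !Rminus_diag, Rabs_R0. lra.
  assert (Hd : forall c, derivable_pt_lim sin c (cos c)) by (intro; apply derivable_pt_lim_sin).
  destruct (Rlt_le_dec a b).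
  - destruct (MVT_cor2 sin cos a b r (fun c _ => Hd c)) as [c [Hc _]].
    rewrite <- (Rabs_Ropp (sin a - sin b)), <- (Rabs_Ropp (a - b)).
    replace (- (sin a - sin b)) with (sin b - sin a) by ring. rewrite Hc.
    rewrite Rabs_mult. replace (- (a - b)) with (b - a) by ring.
    assert (Rabs (cos c) <= 1) by (apply Rabs_le; apply COS_bound).
    assert (0 <= Rabs (b - a)) by apply Rabs_pos. nra.
  - destruct (MVT_cor2 sin cos b a ltac:(lra) (fun c _ => Hd c)) as [c [Hc _]].
    rewrite Hc. rewrite Rabs_mult.
    assert (Rabs (cos c) <= 1) by (apply Rabs_le; apply COS_bound).
    assert (0 <= Rabs (a - b)) by apply Rabs_pos. nra.
Qed.

Lemma abs_le_inv a b : Rabs a <= b -> -b <= a <= b.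
Proof. unfold Rabs; destruct Rcase_abs; lra. Qed.

Lemma abs_ge_cases a b : Rabs a >= b -> a >= b \/ a <= -b.
Proof. unfold Rabs; destruct Rcase_abs; lra. Qed.

Section Bis.
Variable t : R.
Hypothesis ht : 1 < t.
Variable K : R.
Hypothesis hK : 0 < K.

Definition HH := PI - xst t.

Lemma HH_pos : 0 < HH.
Proof. unfold HH. destruct (xst_spec t ht). lra. Qed.

Fixpoint mid (y : R) (j : nat) : R :=
  match j with
  | O => PI
  | S j' => let m := mid y j' in
            if Rle_dec (Psi t m) y then m + hh HH j' else m - hh HH j'
  end.

Lemma hh_half j : hh HH j = HH / 2 ^ j / 2.
Proof. unfold hh. simpl. field. apply pow_nonzero. lra. Qed.

Lemma mid_inv y : 0 <= y <= 2 * PI -> forall j,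
  xst t <= mid y j - HH / 2 ^ j /\ mid y j + HH / 2 ^ j <= 2 * PI - xst t /\
  Rabs (Psi_inv t y - mid y j) <= HH / 2 ^ j.
Proof.
  intros Hy. destruct (Psi_inv_spec t ht y Hy) as [IE PE].
  set (E := Psi_inv t y) in *.
  induction j as [|j IH].
  - simpl. unfold HH. rewrite Rdiv_1_r. unfold In_I in IE. split; [lra|split;[lra|]].
    apply Rabs_le. lra.
  - destruct IH as [I1 [I2 I3]]. simpl mid. set (m := mid y j) in *.
    rewrite hh_half. set (r := HH / 2 ^ j) in *.
    assert (Hr : 0 < r) by (unfold r; apply Rdiv_lt_0_compat; [apply HH_pos| apply pow_lt; lra]).
    replace (HH / 2 ^ S j) with (r / 2) by (unfold r; simpl; field; apply pow_nonzero; lra).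
    assert (Im : In_I t m) by (unfold In_I; lra).
    apply abs_le_inv in I3.
    destruct (Rle_dec (Psi t m) y) as [Hle|Hgt].
    + assert (m <= E).
      { destruct (Rle_lt_dec m E); auto. assert (Psi t E < Psi t m) by (apply Psi_strict; auto). lra. }
      split; [lra|split;[lra|]]. apply Rabs_le; lra.
    + assert (E < m).
      { destruct (Rlt_le_dec E m); auto. destruct (Req_dec E m). subst E. rewrite H in PE. lra.
        assert (Psi t m < Psi t E) by (apply Psi_strict; auto; lra). lra. }
      split; [lra|split;[lra|]]. apply Rabs_le; lra.
Qed.

Lemma step_exact y j :
  Rabs (y - Psi t (mid y j)) >= / K ->
  stepN K t (hh HH j) (y - mid y j, sin (mid y j), cos (mid y j)) =
  (y - mid y (S j), sin (mid y (S j)), cos (mid y (S j))).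
Proof.
  intros Hz. simpl mid. set (m := mid y j). fold m in Hz. set (h := hh HH j).
  unfold stepN. unfold Psi in Hz.
  replace (y - m + t * sin m) with (y - (m - t * sin m)) by ring.
  set (z := y - (m - t * sin m)) in *.
  assert (Hs := SIN_bound m). assert (Hc := COS_bound m).
  assert (HKi : K * / K = 1) by (field; lra).
  destruct (Rle_dec (Psi t m) y) as [Hle|Hgt]; unfold Psi in Hle || unfold Psi in Hgt.
  - assert (HKp : 0 < / K) by (apply Rinv_0_lt_compat; lra).
    assert (Hz1 : z >= / K) by (unfold z in *; apply abs_ge_cases in Hz as [? | ?]; lra).
    assert (K * z >= 1) by nra.
    rewrite (Rmax_right 0 ((K * z + 1) / 2)) by lra.
    rewrite (Rmax_right 0 ((K * z + 1) / 2 - 1)) by lra.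
    replace ((K * z + 1) / 2 - ((K * z + 1) / 2 - 1)) with 1 by ring.
    replace (cos m - 1 + 1) with (cos m) by ring. replace (- cos m - 1 + 1) with (- cos m) by ring.
    replace (sin m - 1 + 1) with (sin m) by ring. replace (- sin m - 1 + 1) with (- sin m) by ring.
    rewrite !relu_dec. rewrite sin_plus, cos_plus. f_equal; [f_equal|]; ring.
  - assert (Hz1 : z <= - / K).
    { assert (0 < /K) by (apply Rinv_0_lt_compat; lra).
      unfold z in *. apply abs_ge_cases in Hz as [? | ?]; [| lra]. exfalso. apply Hgt. lra. }
    assert (K * z <= -1) by nra.
    rewrite (Rmax_left 0 ((K * z + 1) / 2)) by lra.
    rewrite (Rmax_left 0 ((K * z + 1) / 2 - 1)) by lra.
    replace (0 - 0) with 0 by ring.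
    rewrite (Rmax_left 0 (cos m - 1 + 0)) by lra. rewrite (Rmax_left 0 (- cos m - 1 + 0)) by lra.
    rewrite (Rmax_left 0 (sin m - 1 + 0)) by lra. rewrite (Rmax_left 0 (- sin m - 1 + 0)) by lra.
    rewrite sin_minus, cos_minus. f_equal; [f_equal|]; ring.
Qed.

Lemma iter_exact y n : forall j,
  (forall i, (j <= i < j + n)%nat -> Rabs (y - Psi t (mid y i)) >= / K) ->
  iterN K t HH j n (y - mid y j, sin (mid y j), cos (mid y j)) =
  (y - mid y (j + n), sin (mid y (j + n)), cos (mid y (j + n))).
Proof.
  induction n as [|n IH]; intros j Hg.
  - simpl. rewrite Nat.add_0_r. reflexivity.
  - cbn [iterN]. rewrite step_exact by (apply Hg; lia).
    rewrite IH. rewrite Nat.add_succ_r. reflexivity. intros i Hi. apply Hg. lia.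
Qed.


Fixpoint Mids (j : nat) : list R :=
  match j with
  | O => [PI]
  | S j' => flat_map (fun m => [m + hh HH j'; m - hh HH j']) (Mids j')
  end.

Lemma mid_in y j : In (mid y j) (Mids j).
Proof.
  induction j. simpl; auto.
  simpl. apply in_flat_map. exists (mid y j). split; auto.
  destruct Rle_dec; simpl; auto.
Qed.

Definition Pts (n : nat) : list R :=
  0 :: flat_map (fun j => flat_map (fun m => [Psi t m; Psi t m - 2 * PI]) (Mids j)) (seq 0 n).

Definition hat (P x : R) := Rmax 0 (2 - K * Rabs (x - P)).
Definition sumhat (l : list R) (x : R) := fold_right (fun P acc => hat P x + acc) 0 l.

Lemma sumhat_nonneg l x : 0 <= sumhat l x.
Proof. induction l; simpl. lra. unfold hat. assert (H := Rmax_l 0 (2 - K * Rabs (x - a))). lra. Qed.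

Lemma sumhat_ge l P x : In P l -> hat P x <= sumhat l x.
Proof.
  induction l as [|a l IH]; simpl. tauto.
  intros [->|Hi]. assert (H := sumhat_nonneg l x). lra.
  assert (H := IH Hi). assert (Rmax 0 (2 - K * Rabs (x - a)) >= 0) by (apply Rle_ge, Rmax_l).
  unfold hat in *. lra.
Qed.

Lemma hat_ge1 P x : Rabs (x - P) < / K -> 1 <= hat P x.
Proof.
  intros H. unfold hat. eapply Rle_trans; [|apply Rmax_r].
  assert (K * Rabs (x - P) < K * / K) by (apply Rmult_lt_compat_l; lra).
  rewrite Rinv_r in H0 by lra. lra.
Qed.

Lemma outF_bound st : Rabs (outF st) <= 1.
Proof.
  destruct st as [[d s] c]. unfold outF. apply Rabs_le.
  unfold Rmax; repeat destruct Rle_dec; lra.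
Qed.

Lemma U_bound x : Rabs (U t x) <= 1.
Proof.
  unfold U. destruct Rlt_dec; rewrite Rabs_Ropp; apply Rabs_le; apply SIN_bound.
Qed.

Lemma pointwise n x : - 2 * PI <= x <= 2 * PI ->
  Rabs (realize (net K t HH n) x - U t x) <= HH / 2 ^ n + 2 * sumhat (Pts n) x.
Proof.
  intros Hx. rewrite realize_net.
  assert (HHn : 0 < HH / 2 ^ n) by (apply Rdiv_lt_0_compat; [apply HH_pos | apply pow_lt; lra]).
  assert (Hsn := sumhat_nonneg (Pts n) x).
  assert (Htot : Rabs (outF (iterN K t HH 0 n (init K x)) - U t x) <= 2).
  { eapply Rle_trans. apply Rabs_triang. rewrite Rabs_Ropp.
    assert (H1 := outF_bound (iterN K t HH 0 n (init K x))). assert (H2 := U_bound x). lra. }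
  assert (HKp : 0 < / K) by (apply Rinv_0_lt_compat; lra).
  destruct (Rlt_le_dec (Rabs x) (/ K)) as [Hs|Hb].
  { assert (1 <= sumhat (Pts n) x).
    { eapply Rle_trans. apply (hat_ge1 0). rewrite Rminus_0_r; exact Hs. apply sumhat_ge. left; auto. }
    lra. }
  set (y := if Rlt_dec x 0 then x + 2 * PI else x).
  assert (Hy : 0 <= y <= 2 * PI).
  { unfold y; destruct Rlt_dec. lra. lra. }
  assert (HU : U t x = - sin (Psi_inv t y)) by (unfold U, y; destruct Rlt_dec; reflexivity).
  assert (Hinit : init K x = (y - mid y 0, sin (mid y 0), cos (mid y 0))).
  { simpl mid. rewrite sin_PI, cos_PI. unfold init, y.
    apply Rle_ge, abs_ge_cases in Hb as [Hb|Hb]; [apply Rge_le in Hb|].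
    - assert (1 <= K * x).
      { assert (K * / K = 1) by (field; lra). nra. }
      destruct Rlt_dec. lra.
      rewrite (Rmax_right 0 ((K * x + 1) / 2)) by lra.
      rewrite (Rmax_right 0 ((K * x + 1) / 2 - 1)) by lra.
      apply (f_equal (fun u => (u, 0, -1))); ring.
    - assert (K * x <= -1).
      { assert (K * / K = 1) by (field; lra). nra. }
      destruct Rlt_dec. 2: lra.
      rewrite (Rmax_left 0 ((K * x + 1) / 2)) by lra.
      rewrite (Rmax_left 0 ((K * x + 1) / 2 - 1)) by lra.
      apply (f_equal (fun u => (u, 0, -1))); ring. }
  destruct (classic (forall i, (0 <= i < 0 + n)%nat -> Rabs (y - Psi t (mid y i)) >= / K)) as [Hg|Hn].
  - rewrite Hinit, iter_exact by exact Hg. simpl (0 + n)%nat. unfold outF.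
    assert (Hs := SIN_bound (mid y n)).
    rewrite (Rmax_right 0 (- sin (mid y n) + 1)) by lra.
    rewrite (Rmax_left 0 (- sin (mid y n) - 1)) by lra.
    rewrite HU. replace (- sin (mid y n) + 1 - 0 - 1 - - sin (Psi_inv t y))
      with (sin (Psi_inv t y) - sin (mid y n)) by ring.
    destruct (mid_inv y Hy n) as [_ [_ H3]].
    assert (H4 := sin_lip (Psi_inv t y) (mid y n)). lra.
  - apply not_all_ex_not in Hn as [i Hi].
    apply imply_to_and in Hi as [Hi1 Hi2]. apply Rnot_ge_lt in Hi2.
    set (P := if Rlt_dec x 0 then Psi t (mid y i) - 2 * PI else Psi t (mid y i)).
    assert (HP : Rabs (x - P) < / K).
    { unfold P. replace (x - _) with (y - Psi t (mid y i)); [exact Hi2|].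
      unfold y. destruct Rlt_dec; ring. }
    assert (HPin : In P (Pts n)).
    { right. apply in_flat_map. exists i. split. apply in_seq. lia.
      apply in_flat_map. exists (mid y i). split. apply mid_in.
      unfold P; destruct Rlt_dec; simpl; auto. }
    assert (H1 := hat_ge1 P x HP). assert (H2 := sumhat_ge _ _ x HPin). lra.
Qed.

End Bis.

Lemma RInt_plus' f g a b : ex_RInt f a b -> ex_RInt g a b -> RInt (fun x => f x + g x) a b = RInt f a b + RInt g a b.
Proof. intros. exact (RInt_plus f g a b H H0). Qed.
Lemma RInt_const' a b c : RInt (fun _ => c) a b = (b - a) * c.
Proof. intros. rewrite RInt_const. reflexivity. Qed.
Lemma ex_RInt_plus' f g a b : ex_RInt f a b -> ex_RInt g a b -> ex_RInt (fun x => f x + g x) a b.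
Proof. intros. exact (ex_RInt_plus f g a b H H0). Qed.
Lemma RInt_scal' f a b l : ex_RInt f a b -> RInt (fun x => l * f x) a b = l * RInt f a b.
Proof. intros. exact (RInt_scal f a b l H). Qed.
Lemma RInt_Chasles' f a b c : ex_RInt f a b -> ex_RInt f b c -> RInt f a b + RInt f b c = RInt f a c.
Proof. intros. exact (RInt_Chasles f a b c H H0). Qed.
Lemma cp_cont f x : continuity_pt f x -> continuous f x.
Proof. intros H. apply (proj1 (continuity_pt_filterlim f x)). exact H. Qed.
Lemma ex_RInt_cp f a b : (forall x, continuity_pt f x) -> ex_RInt f a b.
Proof. intros H. apply (@ex_RInt_continuous R_CompleteNormedModule). intros z _. apply cp_cont, H. Qed.
Lemma cp_comp f g x : continuity_pt f x -> continuity_pt g (f x) -> continuity_pt (fun y => g (f y)) x.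
Proof. intros. apply (continuity_pt_comp f g); auto. Qed.

Section Int.
Variable t : R.
Hypothesis ht : 1 < t.
Variable K : R.
Hypothesis hK : 0 < K.

Lemma hat_cont P x : continuity_pt (hat K P) x.
Proof. unfold hat. apply cp_relu. apply cp_minus. apply cp_const. apply cp_mult. apply cp_const.
  apply cp_abs. apply cp_minus. apply cp_id. apply cp_const. Qed.

Lemma sumhat_cont l x : continuity_pt (sumhat K l) x.
Proof.
  induction l; simpl. apply cp_const.
  change (continuity_pt (fun y => hat K a y + sumhat K l y) x). apply cp_plus. apply hat_cont. auto.
Qed.

Lemma hat_int P : RInt (hat K P) (- 2 * PI) (2 * PI) <= 8 / K.
Proof.
  set (a := - 2 * PI). set (b := 2 * PI). set (p := P - 2 / K). set (q := P + 2 / K).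
  set (A := Rmin a p). set (B := Rmax b q).
  assert (HPI := PI_RGT_0).
  assert (Hab : a <= b) by (unfold a, b; lra).
  assert (HK2 : 0 < 2 / K) by (apply Rdiv_lt_0_compat; lra).
  assert (Hpq : p <= q) by (unfold p, q; assert (0 < 2 / K) by (apply Rdiv_lt_0_compat; lra); lra).
  assert (HA1 : A <= a) by apply Rmin_l. assert (HA2 : A <= p) by apply Rmin_r.
  assert (HB1 : b <= B) by apply Rmax_l. assert (HB2 : q <= B) by apply Rmax_r.
  assert (Ex : forall u v, ex_RInt (hat K P) u v) by (intros; apply ex_RInt_cp; apply hat_cont).
  assert (Hnn : forall x, 0 <= hat K P x) by (intro; apply Rmax_l).
  assert (E1 : RInt (hat K P) A a + RInt (hat K P) a b + RInt (hat K P) b B = RInt (hat K P) A B).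
  { rewrite RInt_Chasles' by auto. apply RInt_Chasles'; auto. }
  assert (E2 : RInt (hat K P) A p + RInt (hat K P) p q + RInt (hat K P) q B = RInt (hat K P) A B).
  { rewrite RInt_Chasles' by auto. apply RInt_Chasles'; auto. }
  assert (R1 : 0 <= RInt (hat K P) A a) by (apply RInt_ge_0; auto).
  assert (R2 : 0 <= RInt (hat K P) b B) by (apply RInt_ge_0; auto).
  assert (Z1 : RInt (hat K P) A p = 0).
  { rewrite (RInt_ext _ (fun _ => 0)); [rewrite RInt_const'; apply Rmult_0_r|].
    intros x Hx. rewrite Rmin_left in Hx by auto. rewrite Rmax_right in Hx by auto.
    unfold hat. apply Rmax_left.
    assert (2 / K < Rabs (x - P)) by (rewrite Rabs_left by (unfold p in Hx; lra); unfold p in Hx; lra).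
    assert (K * (2 / K) < K * Rabs (x - P)) by (apply Rmult_lt_compat_l; lra).
    replace (K * (2 / K)) with 2 in H0 by (field; lra). lra. }
  assert (Z3 : RInt (hat K P) q B = 0).
  { rewrite (RInt_ext _ (fun _ => 0)); [rewrite RInt_const'; apply Rmult_0_r|].
    intros x Hx. rewrite Rmin_left in Hx by auto. rewrite Rmax_right in Hx by auto.
    unfold hat. apply Rmax_left.
    assert (2 / K < Rabs (x - P)) by (rewrite Rabs_right by (unfold q in Hx; lra); unfold q in Hx; lra).
    assert (K * (2 / K) < K * Rabs (x - P)) by (apply Rmult_lt_compat_l; lra).
    replace (K * (2 / K)) with 2 in H0 by (field; lra). lra. }
  assert (Z2 : RInt (hat K P) p q <= 8 / K).
  { eapply Rle_trans. apply (RInt_le _ (fun _ => 2)); auto. apply ex_RInt_const.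
    intros x _. unfold hat. apply Rmax_lub. lra. assert (0 <= K * Rabs (x - P)).
    apply Rmult_le_pos. lra. apply Rabs_pos. lra.
    rewrite RInt_const'. unfold q, p. apply Req_le. field. lra. }
  lra.
Qed.

Lemma sumhat_int l : RInt (sumhat K l) (- 2 * PI) (2 * PI) <= INR (length l) * (8 / K).
Proof.
  induction l as [|P l IH].
  - simpl. unfold sumhat; simpl. rewrite RInt_const'. lra.
  - change (RInt (fun y => hat K P y + sumhat K l y) (- 2 * PI) (2 * PI) <= INR (length (P :: l)) * (8 / K)).
    rewrite RInt_plus'. 2,3: apply ex_RInt_cp; intro; (apply hat_cont || apply sumhat_cont).
    rewrite length_cons, S_INR. assert (H := hat_int P). lra.
Qed.

Lemma len2 (f : R -> R) (g : R -> R) l : length (flat_map (fun m => [f m; g m]) l) = (2 * length l)%nat.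
Proof. induction l; simpl; [reflexivity| rewrite IHl; lia]. Qed.

Lemma Mids_len j : length (Mids t j) = (2 ^ j)%nat.
Proof.
  induction j; simpl. reflexivity.
  rewrite (len2 (fun m => m + hh (HH t) j) (fun m => m - hh (HH t) j)), IHj. lia.
Qed.

Lemma Pts_len n : (length (Pts t n) + 1 = 2 ^ (S n))%nat.
Proof.
  unfold Pts. cbn [length].
  induction n. simpl. reflexivity.
  rewrite seq_S, flat_map_app, length_app. simpl (flat_map _ [_]). rewrite app_nil_r.
  rewrite (len2 (fun m => Psi t m) (fun m => Psi t m - 2 * PI)), Mids_len.
  simpl in *. lia.
Qed.

Definition Pc (y : R) := Psi_inv t (Rmax 0 (Rmin (2 * PI) y)).

Lemma Pc_lip a b : Rabs (Pc a - Pc b) <= Rabs (a - b) / m0 t.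
Proof.
  assert (HPI := PI_RGT_0).
  assert (Hc : forall y, 0 <= Rmax 0 (Rmin (2 * PI) y) <= 2 * PI).
  { intro y. split. apply Rmax_l. apply Rmax_lub. lra. apply Rmin_l. }
  unfold Pc. eapply Rle_trans. apply Psi_inv_lip; auto.
  assert (Hm := m0_pos t ht). unfold Rdiv. apply Rmult_le_compat_r. left; apply Rinv_0_lt_compat; lra.
  unfold Rmax, Rmin, Rabs. repeat (destruct Rle_dec || destruct Rcase_abs); lra.
Qed.

Lemma Pc_cont y : continuity_pt Pc y.
Proof.
  intros eps Heps. assert (Hm := m0_pos t ht). exists (eps * m0 t). split.
  apply Rmult_lt_0_compat; lra.
  intros x [_ Hx]. unfold dist in *; simpl in *. unfold R_dist in *.
  eapply Rle_lt_trans. apply Pc_lip. apply Rmult_lt_reg_r with (m0 t); auto.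
  unfold Rdiv. rewrite Rmult_assoc, Rinv_l, Rmult_1_r by lra. exact Hx.
Qed.

Lemma int_bound n :
  ex_RInt (fun x => Rabs (realize (net K t (HH t) n) x - U t x)) (- 2 * PI) (2 * PI) /\
  RInt (fun x => Rabs (realize (net K t (HH t) n) x - U t x)) (- 2 * PI) (2 * PI)
    <= 4 * PI * (HH t / 2 ^ n) + 2 * (2 ^ (S n) * (8 / K)).
Proof.
  assert (HPI := PI_RGT_0).
  set (F := fun x => Rabs (realize (net K t (HH t) n) x - U t x)).
  assert (ExF : ex_RInt F (- 2 * PI) (2 * PI)).
  { apply ex_RInt_Chasles with 0.
    - apply ex_RInt_ext with (fun x => Rabs (realize (net K t (HH t) n) x + sin (Pc (x + 2 * PI)))).
      + intros x Hx. rewrite Rmin_left in Hx by lra. rewrite Rmax_right in Hx by lra.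
        unfold F, U, Pc. destruct Rlt_dec. 2: lra.
        rewrite Rmin_right by lra. rewrite Rmax_right by lra. f_equal. ring.
      + apply ex_RInt_cp. intro x. apply cp_abs. apply cp_plus. apply realize_cont.
        apply (cp_comp (fun y => Pc (y + 2 * PI)) sin). apply cp_comp. apply cp_plus. apply cp_id. apply cp_const.
        apply Pc_cont. apply continuity_sin.
    - apply ex_RInt_ext with (fun x => Rabs (realize (net K t (HH t) n) x + sin (Pc x))).
      + intros x Hx. rewrite Rmin_left in Hx by lra. rewrite Rmax_right in Hx by lra.
        unfold F, U, Pc. destruct Rlt_dec. lra.
        rewrite Rmin_right by lra. rewrite Rmax_right by lra. f_equal. ring.
      + apply ex_RInt_cp. intro x. apply cp_abs. apply cp_plus. apply realize_cont.
        apply (cp_comp Pc sin). apply Pc_cont. apply continuity_sin. }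
  split. exact ExF.
  assert (ExS : ex_RInt (sumhat K (Pts t n)) (- 2 * PI) (2 * PI)) by (apply ex_RInt_cp; apply sumhat_cont).
  eapply Rle_trans. apply (RInt_le F (fun x => HH t / 2 ^ n + 2 * sumhat K (Pts t n) x)).
  - lra.
  - exact ExF.
  - apply ex_RInt_plus'. apply ex_RInt_const. apply (ex_RInt_scal (sumhat K (Pts t n))). exact ExS.
  - intros x Hx. apply pointwise; auto. lra.
  - rewrite RInt_plus'. 2: apply ex_RInt_const. 2: apply (ex_RInt_scal (sumhat K (Pts t n))); exact ExS.
    rewrite RInt_const', RInt_scal' by exact ExS.
    assert (H1 := sumhat_int (Pts t n)).
    assert (H2 := Pts_len n).
    assert (H3 : INR (length (Pts t n)) <= 2 ^ S n).
    { rewrite <- (Rmult_1_l (2 ^ S n)). replace 2 with (INR 2) by reflexivity. rewrite <- pow_INR.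
      rewrite <- H2. rewrite plus_INR. simpl. lra. }
    assert (0 <= 8 / K) by (apply Rdiv_le_0_compat; lra).
    assert (INR (length (Pts t n)) * (8 / K) <= 2 ^ S n * (8 / K)) by (apply Rmult_le_compat_r; auto).
    lra.
Qed.

End Int.

Lemma choose_N eps : 0 < eps <= 1 / 2 -> exists N : nat,
  / eps <= 2 ^ N /\ INR N <= ln (/ eps) / ln 2 + 1.
Proof.
  intros He. set (L := ln (/ eps)). assert (Hl2 := ln_lt_2).
  assert (HL : ln 2 <= L).
  { unfold L. apply ln_le. lra. rewrite <- (Rinv_inv 2). apply Rinv_le_contravar; lra. }
  set (z := L / ln 2).
  assert (Hz : 0 < z) by (unfold z; apply Rdiv_lt_0_compat; lra).
  destruct (archimed z) as [A1 A2].
  assert (Hu : (0 < up z)%Z) by (apply lt_0_IZR; lra).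
  exists (Z.to_nat (up z)).
  assert (HN : INR (Z.to_nat (up z)) = IZR (up z)) by (rewrite INR_IZR_INZ, Z2Nat.id; [reflexivity| lia]).
  rewrite HN. split; [|unfold z in *; lra].
  rewrite <- Rpower_pow by lra. rewrite HN. unfold Rpower.
  rewrite <- (exp_ln (/ eps)) by (apply Rinv_0_lt_compat; lra). fold L.
  assert (L <= IZR (up z) * ln 2).
  { replace L with (z * ln 2) by (unfold z; field; lra). apply Rmult_le_compat_r; lra. }
  destruct (Req_dec L (IZR (up z) * ln 2)) as [E|E]. rewrite E; lra.
  left. apply exp_increasing. lra.
Qed.

Theorem mainTheorem18 (t : R) (ht : 1 < t) :
  exists C : R, 0 < C /\
    forall eps : R, 0 < eps <= 1 / 2 ->
      exists net : list affine,
        wf_net 1 net /\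
        INR (depth net) <= C * (ln (/ eps)) ^ 2 /\
        INR (width net) <= C /\
        ex_RInt (fun x => Rabs (realize net x - U t x)) (- 2 * PI) (2 * PI) /\
        RInt (fun x => Rabs (realize net x - U t x)) (- 2 * PI) (2 * PI) <= eps.
Proof.
  exists 120. split. lra. intros eps He.
  destruct (choose_N eps He) as [N [HN1 HN2]].
  set (n := (N + 7)%nat).
  set (K := 64 * 2 ^ (S n) / eps).
  assert (Hpn : 0 < 2 ^ S n) by (apply pow_lt; lra).
  assert (HK : 0 < K) by (unfold K; apply Rdiv_lt_0_compat; lra).
  exists (net K t (HH t) n).
  destruct (int_bound t ht K HK n) as [Hex Hint].
  split; [apply wf_netK|]. split; [|split; [|split; [exact Hex|]]].
  - rewrite depth_net. unfold n. rewrite plus_INR, mult_INR, plus_INR. simpl (INR 3). simpl (INR 7).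
    set (L := ln (/ eps)) in *. assert (Hl2 := ln_lt_2).
    assert (HL : ln 2 <= L).
    { unfold L. apply ln_le. lra. rewrite <- (Rinv_inv 2). apply Rinv_le_contravar; lra. }
    assert (L / ln 2 <= 2 * L).
    { apply Rmult_le_reg_r with (ln 2). lra. unfold Rdiv. rewrite Rmult_assoc, Rinv_l by lra. nra. }
    assert (INR N <= 2 * L + 1) by lra. simpl. nra.
  - assert (H := width_net K t (HH t) n). apply le_INR in H. simpl in H. lra.
  - eapply Rle_trans. exact Hint.
    assert (HH1 : HH t <= PI) by (unfold HH; destruct (xst_spec t ht); lra).
    assert (HH0 : 0 < HH t) by (apply HH_pos; auto).
    assert (HP4 := PI_4). assert (HP0 := PI_RGT_0).
    assert (E1 : 2 * (2 ^ S n * (8 / K)) = eps / 4) by (unfold K; field; lra).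
    assert (E2 : 2 ^ n = 128 * 2 ^ N) by (unfold n; rewrite pow_add; simpl; ring).
    assert (HpN : 0 < 2 ^ N) by (apply pow_lt; lra).
    assert (E3 : 4 * PI * (HH t / 2 ^ n) <= eps / 2).
    { rewrite E2. assert (4 * PI * HH t <= 64) by nra.
      assert (1 <= eps * 2 ^ N).
      { apply Rmult_le_reg_l with (/ eps). apply Rinv_0_lt_compat; lra.
        rewrite <- Rmult_assoc, Rinv_l, Rmult_1_l, Rmult_1_r by lra. exact HN1. }
      apply Rmult_le_reg_r with (128 * 2 ^ N). nra.
      unfold Rdiv. rewrite Rmult_assoc, (Rmult_assoc (HH t)), Rinv_l by nra. nra. }
    lra.
Qed.
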